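(* Consider the wireless network described in the context, with nodes sending independent codewords under decode-and-forward. Run the nearest neighbor set algorithm (NNSA), which produces a finite set of candidate routes from node $1$ to node $D$. Then every candidate route that attains the largest value of $R_{\mathrm{DF}}$ among the candidates is optimal for DF, i.e., its rate equals $R_{\mathrm{DF}}^{\max}$.
   Context: Network: a finite set of nodes $\mathcal{S}=\{1,2,\dots,D\}$, $D\ge 2$. Node $1$ is the source and node $D$ is the destination. Received powers: for distinct nodes $i,t$, the power received at $t$ from $i$ is a positive real number $P_{it}$. All receivers have the same noise power $N>0$. Routes: a route is an ordered tuple of distinct nodes $\mathcal{M}=(m_1,\dots,m_L)$ with $m_1=1$ and $L\ge1$. It is a route from the source to the destination if moreover $m_L=D$. For $a\notin\mathcal{M}$, $\mathcal{M}\cup\{a\}$ denotes $(m_1,\dots,m_L,a)$. DF with independent codewords: the reception rate of node $m_t$ ($2\le t\le L$) in route $\mathcal{M}$ is $$R_{m_t}(\mathcal{M})=\tfrac12\log\Big(1+N^{-1}\sum_{i=1}^{t-1}P_{m_i m_t}\Big).$$ The supported DF rate (for $L\ge2$) is $R_{\mathrm{DF}}(\mathcal{M})=\min_{2\le t\le L}R_{m_t}(\mathcal{M})$. Also $R_{\mathrm{DF}}^{\max}=\max R_{\mathrm{DF}}(\mathcal{M})$ over all routes from $1$ to $D$. Nearest neighbor set: for a route $\mathcal{M}$ with $\mathcal{S}\setminus\mathcal{M}\neq\emptyset$, the nearest neighbor set is the smallest nonempty set $\mathcal{N}\subseteq\mathcal{S}\setminus\mathcal{M}$ with the following property. For all $n\in\mathcal{N}$,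 all $a\in\mathcal{S}\setminus(\mathcal{M}\cup\mathcal{N})$ and all $m\in\mathcal{M}$ we have $P_{mn}\ge P_{ma}$. Moreover, for every pair $(n,a)$ with $n\in\mathcal{N}$ and $a\in\mathcal{S}\setminus(\mathcal{M}\cup\mathcal{N})$, at least one of these inequalities (over $m\in\mathcal{M}$) is strict. NNSA: 1. Start with the single partial route $(1)$. 2. For a partial route $\mathcal{M}$ not containing $D$, compute its nearest neighbor set $\mathcal{N}=\{n_1,\dots,n_{|\mathcal{N}|}\}$, and replace $\mathcal{M}$ by the $|\mathcal{N}|$ routes $\mathcal{M}\cup\{n_i\}$, $i=1,\dots,|\mathcal{N}|$. 3. Repeat step 2 on every partial route until every route contains $D$; such routes end at $D$. The resulting routes are the NNSA candidates. *)

(* Defs.v *)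
From Stdlib Require Import Reals List.
Import ListNotations.
Open Scope R_scope.

Definition in_S (D i : nat) : Prop := (1 <= i <= D)%nat.

Definition is_route (D : nat) (M : list nat) : Prop :=
  NoDup M /\ Forall (in_S D) M /\ hd 0%nat M = 1%nat /\ M <> [].

Definition is_route_1D (D : nat) (M : list nat) : Prop :=
  is_route D M /\ last M 0%nat = D.

Definition recv_rate (P : nat -> nat -> R) (noise : R) (prefix : list nat) (m : nat) : R :=
  / 2 * ln (1 + / noise * fold_right Rplus 0 (map (fun i => P i m) prefix)).

Fixpoint rates_aux (P : nat -> nat -> R) (noise : R) (prefix rest : list nat) : list R :=
  match rest with
  | [] => []
  | a :: r => recv_rate P noise prefix a :: rates_aux P noise (prefix ++ [a]) r
  end.

Definition rates (P : nat -> nat -> R) (noise : R) (M : list nat) : list R :=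
  match M with
  | [] => []
  | m1 :: r => rates_aux P noise [m1] r
  end.

(* R_DF(M) = min_{2<=t<=L} R_{m_t}(M)  (only meaningful for L >= 2) *)
Definition R_DF (P : nat -> nat -> R) (noise : R) (M : list nat) : R :=
  match rates P noise M with
  | [] => 0
  | x :: xs => fold_left Rmin xs x
  end.

Definition is_R_DF_max (D : nat) (P : nat -> nat -> R) (noise : R) (r : R) : Prop :=
  (exists M, is_route_1D D M /\ R_DF P noise M = r) /\
  (forall M, is_route_1D D M -> R_DF P noise M <= r).

Definition nn_property (D : nat) (P : nat -> nat -> R) (M : list nat) (Nn : nat -> Prop) : Prop :=
  (exists n, Nn n) /\
  (forall n, Nn n -> in_S D n /\ ~ In n M) /\
  (forall n a, Nn n -> in_S D a -> ~ In a M -> ~ Nn a ->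
     (forall m, In m M -> P m a <= P m n) /\
     (exists m, In m M /\ P m a < P m n)).

Definition is_NNS (D : nat) (P : nat -> nat -> R) (M : list nat) (Nn : nat -> Prop) : Prop :=
  nn_property D P M Nn /\
  (forall Nn', nn_property D P M Nn' -> forall x, Nn x -> Nn' x).

Inductive nnsa_partial (D : nat) (P : nat -> nat -> R) : list nat -> Prop :=
  | nnsa_start : nnsa_partial D P [1%nat]
  | nnsa_step : forall M Nn n,
      nnsa_partial D P M -> ~ In D M -> is_NNS D P M Nn -> Nn n ->
      nnsa_partial D P (M ++ [n]).

Definition nnsa_candidate (D : nat) (P : nat -> nat -> R) (M : list nat) : Prop :=
  nnsa_partial D P M /\ last M 0%nat = D.

(* Main.v *)
Require Import Defs.
From Stdlib Require Import Reals List Lra Lia Classical.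
Import ListNotations.
Open Scope R_scope.

Lemma my_ln_le x y : 0 < x -> x <= y -> ln x <= ln y.
Proof. intros Hx Hxy. destruct (Rle_lt_or_eq_dec _ _ Hxy) as [H|H].
  left; apply ln_increasing; auto. subst; lra. Qed.

Lemma my_last_In (l : list nat) d : l <> [] -> In (last l d) l.
Proof. induction l as [|a l IH]; intros H; [congruence|].
  destruct l as [|b l']; [simpl; auto|]. right. apply IH. discriminate. Qed.

Lemma fold_min_le : forall xs x, fold_left Rmin xs x <= x /\ forall y, In y xs -> fold_left Rmin xs x <= y.
Proof. induction xs as [|z xs IH]; intros x; simpl.
  - split; [lra| tauto].
  - destruct (IH (Rmin x z)) as [H1 H2]. split.
    + eapply Rle_trans; [exact H1| apply Rmin_l].
    + intros y [<-|Hy]; [eapply Rle_trans; [exact H1| apply Rmin_r]| auto]. Qed.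

Lemma fold_min_ge : forall xs x r, r <= x -> (forall y, In y xs -> r <= y) -> r <= fold_left Rmin xs x.
Proof. induction xs as [|z xs IH]; intros x r Hx Hy; simpl; auto.
  apply IH. apply Rmin_glb; auto with datatypes. intros; auto with datatypes. Qed.

Lemma R_DF_le_elem P noise M y : In y (rates P noise M) -> R_DF P noise M <= y.
Proof. unfold R_DF. destruct (rates P noise M) as [|x xs]; [simpl; tauto|].
  intros [<-|H]; [apply (proj1 (fold_min_le xs x))| apply (proj2 (fold_min_le xs x)); auto]. Qed.

Lemma rates_aux_in P noise : forall pre p a post,
  In (recv_rate P noise (p ++ pre) a) (rates_aux P noise p (pre ++ a :: post)).
Proof. induction pre as [|b pre IH]; intros p a post; simpl.
  - rewrite app_nil_r; left; auto.
  - right. specialize (IH (p ++ [b]) a post). rewrite <- app_assoc in IH. exact IH. Qed.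

Lemma rates_aux_snoc P noise : forall rest p n,
  rates_aux P noise p (rest ++ [n]) = rates_aux P noise p rest ++ [recv_rate P noise (p ++ rest) n].
Proof. induction rest as [|b rest IH]; intros p n; simpl.
  - rewrite app_nil_r; auto.
  - rewrite IH, <- app_assoc. reflexivity. Qed.

Definition sumf (f : nat -> R) (l : list nat) := fold_right Rplus 0 (map f l).

Lemma sumf_nonneg f l : (forall x, In x l -> 0 <= f x) -> 0 <= sumf f l.
Proof. induction l as [|a l IH]; intros H; unfold sumf in *; simpl; [lra|].
  assert (0 <= f a) by auto with datatypes. assert (0 <= fold_right Rplus 0 (map f l)) by (apply IH; auto with datatypes). lra. Qed.

Lemma sumf_mono f g l : (forall x, In x l -> f x <= g x) -> sumf f l <= sumf g l.
Proof. induction l as [|a l IH]; intros H; unfold sumf in *; simpl; [lra|].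
  assert (f a <= g a) by auto with datatypes. assert (fold_right Rplus 0 (map f l) <= fold_right Rplus 0 (map g l)) by (apply IH; auto with datatypes). lra. Qed.

Lemma sumf_remove f : forall l b, NoDup l -> In b l -> sumf f l = f b + sumf f (remove Nat.eq_dec b l).
Proof. induction l as [|c l IH]; intros b Hnd Hb; [destruct Hb|].
  inversion Hnd; subst. unfold sumf in *. simpl.
  destruct (Nat.eq_dec b c) as [->|Hne].
  - rewrite notin_remove by auto. lra.
  - simpl. destruct Hb as [->|Hb]; [congruence|]. rewrite (IH b); auto. lra. Qed.

Lemma sumf_sub f : forall l2 l1, NoDup l1 -> incl l1 l2 -> (forall x, In x l2 -> 0 <= f x) -> sumf f l1 <= sumf f l2.
Proof. induction l2 as [|b l2 IH]; intros l1 Hnd Hinc Hpos.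
  - destruct l1 as [|a l1]; [unfold sumf; simpl; lra|]. destruct (Hinc a); simpl; auto.
  - unfold sumf at 2; simpl. fold (sumf f l2).
    destruct (in_dec Nat.eq_dec b l1) as [Hb|Hb].
    + rewrite (sumf_remove f l1 b Hnd Hb).
      assert (sumf f (remove Nat.eq_dec b l1) <= sumf f l2); [|lra].
      apply IH; auto with datatypes.
      * clear -Hnd. induction l1 as [|c l1 IHl]; simpl; [constructor|]. inversion Hnd; subst.
        destruct (Nat.eq_dec b c); auto. constructor; auto. intros Hc. apply in_remove in Hc. tauto.
      * intros x Hx. apply in_remove in Hx. destruct Hx as [Hx Hne]. destruct (Hinc x Hx); [congruence|auto].
    + assert (0 <= f b) by auto with datatypes.
      assert (sumf f l1 <= sumf f l2); [|lra]. apply IH; auto with datatypes.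
      intros x Hx. destruct (Hinc x Hx); [subst; tauto|auto]. Qed.

Section Main.
Variables (D : nat) (P : nat -> nat -> R) (noise : R).
Hypothesis hD : (2 <= D)%nat.
Hypothesis hP : forall i t, in_S D i -> in_S D t -> i <> t -> 0 < P i t.
Hypothesis hN : 0 < noise.

Lemma partial_props Q : nnsa_partial D P Q ->
  NoDup Q /\ (forall x, In x Q -> in_S D x) /\ (exists rest, Q = 1%nat :: rest) /\ (In D Q -> last Q 0%nat = D).
Proof. induction 1 as [|M Nn n HM IH HD HN Hn].
  - split; [repeat constructor; simpl; tauto|]. split; [intros x [<-|[]]; unfold in_S; lia|].
    split; [exists []; auto|]. intros [H|[]]. lia.
  - destruct IH as (Hnd & HS & [rest ->] & _).
    destruct HN as [(_ & Hsub & _) _]. destruct (Hsub n Hn) as [HnS HnQ].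
    split; [|split; [|split]].
    + apply NoDup_app; auto. repeat constructor; simpl; tauto. intros a Ha [<-|[]]; tauto.
    + intros x Hx. apply in_app_or in Hx. destruct Hx as [Hx|[<-|[]]]; auto.
    + exists (rest ++ [n]); auto.
    + intros HDi. rewrite last_last. apply in_app_or in HDi. destruct HDi as [H|[H|[]]]; [tauto|auto]. Qed.

Lemma sub_list (A : nat -> Prop) : forall l, exists l', (forall z, In z l' <-> In z l /\ A z) /\ (length l' <= length l)%nat /\
  ((exists z, In z l /\ ~ A z) -> (length l' < length l)%nat).
Proof. induction l as [|a l IH].
  - exists []. split; [simpl; tauto|]. split; [auto|]. intros (z & [] & _).
  - destruct IH as (l' & H1 & H2 & H3). destruct (classic (A a)) as [Ha|Ha].
    + exists (a :: l'). split; [|split].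
      * intros z; simpl; rewrite H1. split; [intros [<-|[]]; tauto| intros [[<-|Hz] Hz']; tauto].
      * simpl; lia.
      * intros (z & [<-|Hz] & Hnz); [tauto|]. simpl. assert (length l' < length l)%nat by (apply H3; eauto). lia.
    + exists l'. split; [|split].
      * intros z; rewrite H1; simpl. split; [tauto|]. intros [[<-|Hz] Hz']; tauto.
      * simpl; lia.
      * intros _. simpl; lia. Qed.

Lemma nested Q A B : nn_property D P Q A -> nn_property D P Q B -> forall x y, A x -> ~ B x -> B y -> A y.
Proof. intros (_ & HA1 & HA2) (_ & HB1 & HB2) x y Ax nBx By. apply NNPP; intros nAy.
  destruct (HB1 y By) as [yS yQ]. destruct (HA1 x Ax) as [xS xQ].
  destruct (HA2 x y Ax yS yQ nAy) as [Hle _].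
  destruct (HB2 y x By xS xQ nBx) as [_ (m & Hm & Hlt)].
  specialize (Hle m Hm). lra. Qed.

Lemma nns_exists_k Q : forall k A, nn_property D P Q A -> (exists l, (forall z, A z <-> In z l) /\ (length l <= k)%nat) ->
  exists Nn, is_NNS D P Q Nn.
Proof. induction k as [|k IH]; intros A HA (l & Hl & Hlen).
  - destruct l; [|simpl in Hlen; lia]. destruct HA as [(z & Hz) _]. apply Hl in Hz. destruct Hz.
  - destruct (classic (forall A', nn_property D P Q A' -> forall x, A x -> A' x)) as [Hmin|Hnm].
    + exists A. split; auto.
    + apply not_all_ex_not in Hnm. destruct Hnm as [A' Hnm].
      apply imply_to_and in Hnm. destruct Hnm as [HA' Hnm].
      apply not_all_ex_not in Hnm. destruct Hnm as [x Hnm]. apply imply_to_and in Hnm. destruct Hnm as [Ax nA'x].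
      apply (IH A' HA'). destruct (sub_list A' l) as (l' & H1 & H2 & H3).
      exists l'. split.
      * intros z. rewrite H1. split; [|tauto]. intros Hz. split; auto. apply Hl. eapply nested; eauto.
      * assert (length l' < length l)%nat; [|lia]. apply H3. exists x. split; auto. apply Hl; auto. Qed.

Lemma nns_exists Q : (exists a, in_S D a /\ ~ In a Q) -> exists Nn, is_NNS D P Q Nn.
Proof. intros Ha.
  set (A0 := fun x => in_S D x /\ ~ In x Q).
  assert (HA0 : nn_property D P Q A0).
  { split; [exact Ha|]. split; [unfold A0; auto|]. intros n a _ aS aQ nA. exfalso; apply nA; split; auto. }
  destruct (sub_list A0 (seq 1 D)) as (l & H1 & H2 & _).
  apply (nns_exists_k Q (length (seq 1 D)) A0 HA0). exists l. split; auto.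
  intros z. rewrite H1, in_seq. unfold A0, in_S. split; [intros [? ?]; split; auto; lia| tauto]. Qed.

Definition good r Q := forall x, In x (rates P noise Q) -> r <= x.

Lemma recv_mono pre Q a b : (forall x, In x pre -> 0 <= P x a) ->
  sumf (fun i => P i a) pre <= sumf (fun i => P i b) Q ->
  recv_rate P noise pre a <= recv_rate P noise Q b.
Proof. intros Hpos Hs. unfold recv_rate. fold (sumf (fun i => P i a) pre). fold (sumf (fun i => P i b) Q).
  pose proof (sumf_nonneg _ _ Hpos).
  assert (0 < / noise) by (apply Rinv_0_lt_compat; auto).
  apply Rmult_le_compat_l; [lra|]. apply my_ln_le.
  - assert (0 <= / noise * sumf (fun i => P i a) pre) by (apply Rmult_le_pos; lra). lra.
  - apply Rplus_le_compat_l. apply Rmult_le_compat_l; lra. Qed.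

Lemma split_first (Q l : list nat) : (exists x, In x l /\ ~ In x Q) ->
  exists pre a post, l = pre ++ a :: post /\ (forall x, In x pre -> In x Q) /\ ~ In a Q.
Proof. induction l as [|b l IH]; intros (x & Hx & HxQ); [destruct Hx|].
  destruct (in_dec Nat.eq_dec b Q) as [Hb|Hb].
  - destruct Hx as [<-|Hx]; [tauto|]. destruct IH as (pre & a & post & -> & H1 & H2); eauto.
    exists (b :: pre), a, post. split; auto. split; auto. intros y [<-|Hy]; auto.
  - exists [], b, l. split; auto. split; [intros _ []|auto]. Qed.

Lemma construct M' (HM' : is_route_1D D M') : forall k Q, nnsa_partial D P Q -> good (R_DF P noise M') Q ->
  (D - length Q <= k)%nat -> exists C, nnsa_candidate D P C /\ good (R_DF P noise M') C.
Proof.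
  destruct HM' as [(Mnd & MS & Mhd & Mne) Mlast].
  set (r := R_DF P noise M').
  destruct M' as [|m1 rest]; [congruence|]. simpl in Mhd. subst m1.
  induction k as [|k IH]; intros Q HQ Hg Hk;
  destruct (partial_props Q HQ) as (Qnd & QS & [qr HQe] & Qlast);
  (destruct (in_dec Nat.eq_dec D Q) as [HDQ|HDQ]; [exists Q; split; [split; auto|auto]|]);
  (assert (Hlen : (length Q <= D - 1)%nat);
    [ replace (D - 1)%nat with (length (seq 1 (D-1))) by apply length_seq;
      apply NoDup_incl_length; auto; intros x Hx; apply in_seq; pose proof (QS x Hx) as [? ?];
      assert (x <> D) by (intros ->; tauto); lia | ]).
  - lia.
  - assert (HDin : In D (1%nat :: rest)) by (rewrite <- Mlast; apply my_last_In; auto).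
    destruct (split_first Q rest) as (pre & a & post & Hrest & Hpre & HaQ).
    { exists D. split; auto. destruct HDin as [H|H]; auto. lia. }
    assert (H1Q : In 1%nat Q) by (rewrite HQe; left; auto).
    assert (aS : in_S D a) by (rewrite Forall_forall in MS; apply MS; rewrite Hrest; right; apply in_or_app; right; left; auto).
    assert (Hra : r <= recv_rate P noise (1%nat :: pre) a).
    { apply R_DF_le_elem. simpl. rewrite Hrest. apply (rates_aux_in P noise pre [1%nat] a post). }
    assert (HposQ : forall x, In x Q -> 0 <= P x a).
    { intros x Hx. left. apply hP; auto. intros ->; tauto. }
    destruct (nns_exists Q (ex_intro _ a (conj aS HaQ))) as [Nn HNn].
    assert (Hn : exists n, Nn n /\ forall q, In q Q -> P q a <= P q n).
    { destruct (classic (Nn a)) as [Ha|Ha]; [exists a; split; auto; intros; lra|].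
      destruct HNn as [(( n & Hn) & _ & H3) _]. exists n. split; auto.
      apply (H3 n a Hn aS HaQ Ha). }
    destruct Hn as (n & Hn & Hdom).
    apply (IH (Q ++ [n])).
    + econstructor; eauto.
    + intros x. rewrite HQe. simpl. rewrite rates_aux_snoc. intros Hx. apply in_app_or in Hx.
      destruct Hx as [Hx|[<-|[]]].
      * apply Hg. rewrite HQe. exact Hx.
      * simpl. rewrite <- HQe. eapply Rle_trans; [exact Hra|].
        apply recv_mono.
        { intros x [<-|Hx]; auto. }
        eapply Rle_trans; [apply (sumf_sub _ Q)|].
        -- rewrite Hrest in Mnd. apply (NoDup_app_remove_r (1%nat :: pre) (a :: post)). exact Mnd.
        -- intros x [<-|Hx]; auto.
        -- auto.
        -- apply sumf_mono; auto.
    + rewrite length_app; simpl. lia.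
Qed.

End Main.

Theorem theorem2 (D : nat) (P : nat -> nat -> R) (noise : R)
  (hD : (2 <= D)%nat)
  (hP : forall i t, in_S D i -> in_S D t -> i <> t -> 0 < P i t)
  (hN : 0 < noise)
  (M : list nat)
  (hM : nnsa_candidate D P M)
  (hbest : forall M', nnsa_candidate D P M' -> R_DF P noise M' <= R_DF P noise M) :
  is_R_DF_max D P noise (R_DF P noise M).
Proof.
  split.
  - exists M. destruct hM as [HM HL]. destruct (partial_props D P hD M HM) as (Hnd & HS & [rest ->] & _).
    repeat split; auto. apply Forall_forall; auto. discriminate.
  - intros M' HM'.
    destruct (construct D P noise hD hP hN M' HM' D [1%nat] (nnsa_start D P)) as (C & HC & Hg).
    + intros x [].
    + simpl; lia.
    + eapply Rle_trans; [|apply (hbest C HC)].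
      destruct HC as [HC HL]. destruct (partial_props D P hD C HC) as (Hnd & HS & [rest ->] & _).
      destruct rest as [|b rest]; [simpl in HL; lia|].
      unfold R_DF, rates. simpl.
      apply fold_min_ge.
      * apply Hg. simpl; auto.
      * intros y Hy. apply Hg. simpl; auto.
Qed.
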